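(* Let $\bm{A}=[\bm{A}_1\ \bm{A}_2]\in\mathbb{R}^{m\times n}$ with $\bm{A}_j\in\mathbb{R}^{m\times n_j}$, $n=n_1+n_2$, have full column rank, and suppose $\bm{A}_1^\top\bm{A}_1=\bm{I}_{n_1}$, $\bm{A}_2^\top\bm{A}_2=\bm{I}_{n_2}$ and $\bm{A}_2^\top\bm{A}_1\neq 0$. Then $\rho_{\mathrm{BGD}}^*\le(\rho_{\mathrm{HB}}^* )^2$.
   Context: $\rho(\cdot)$ denotes the spectral radius (maximum modulus of eigenvalues). For $\gamma_1,\gamma_2>0$ let $\bm{M}(\gamma_1,\gamma_2):=\left(\bm{I}-\begin{bmatrix}0&0\\ \gamma_2\bm{A}_2^\top\bm{A}_1&\gamma_2\bm{A}_2^\top\bm{A}_2\end{bmatrix}\right)\left(\bm{I}-\begin{bmatrix}\gamma_1\bm{A}_1^\top\bm{A}_1&\gamma_1\bm{A}_1^\top\bm{A}_2\\0&0\end{bmatrix}\right)$, the iteration matrix of two-block gradient descent ($\bm{x}_1^+=\bm{x}_1-\gamma_1\bm{A}_1^\top(\bm{A}\bm{x}-\bm{y})$, then $\bm{x}_2^+=\bm{x}_2-\gamma_2\bm{A}_2^\top(\bm{A}_1\bm{x}_1^++\bm{A}_2\bm{x}_2-\bm{y})$) on $F(\bm{x})=\frac12\|\bm{A}\bm{x}-\bm{y}\|_2^2$. Define $\rho_{\mathrm{BGD}}^*:=\min_{\gamma_1>0,\gamma_2>0}\rho(\bm{M}(\gamma_1,\gamma_2))$. For $\alpha>0,\beta\ge0$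 let $\bm{N}(\alpha,\beta):=\begin{bmatrix}0&\bm{I}\\-\beta\bm{I}&(1+\beta)\bm{I}-\alpha\bm{A}^\top\bm{A}\end{bmatrix}$ (heavy-ball iteration matrix) and $\rho_{\mathrm{HB}}^*:=\min_{\alpha>0,\beta\ge0}\rho(\bm{N}(\alpha,\beta))$. *)

(* Defs.v *)
From HB Require Import structures.
From mathcomp Require Import all_boot all_order all_algebra.
From mathcomp Require Import complex.
From mathcomp Require Import classical_sets reals.
Set Implicit Arguments. Unset Strict Implicit. Unset Printing Implicit Defensive.
Import Order.TTheory GRing.Theory Num.Theory.
Local Open Scope ring_scope.
Local Open Scope classical_set_scope.

Definition cplx_mx (R : realType) (k : nat) (B : 'M[R]_k) : 'M[R[i]]_k :=
  map_mx (fun x => (x%:C)%C) B.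

Definition spec_rad (R : realType) (k : nat) (B : 'M[R]_k) : R :=
  sup [set r : R | exists lam : R[i],
         eigenvalue (cplx_mx B) lam /\ r = ComplexField.Normc.normc lam].

Definition M_BGD (R : realType) (m n1 n2 : nat)
  (A1 : 'M[R]_(m, n1)) (A2 : 'M[R]_(m, n2)) (g1 g2 : R) : 'M[R]_(n1 + n2) :=
  (1%:M - block_mx 0 0 (g2 *: (A2^T *m A1)) (g2 *: (A2^T *m A2)))
  *m (1%:M - block_mx (g1 *: (A1^T *m A1)) (g1 *: (A1^T *m A2)) 0 0).

Definition N_HB (R : realType) (m n : nat) (A : 'M[R]_(m, n)) (a b : R)
  : 'M[R]_(n + n) :=
  block_mx 0 1%:M (- b%:M) ((1 + b)%:M - a *: (A^T *m A)).

Definition rho_BGD_star (R : realType) (m n1 n2 : nat)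
  (A1 : 'M[R]_(m, n1)) (A2 : 'M[R]_(m, n2)) : R :=
  inf [set r : R | exists g1 g2 : R, 0 < g1 /\ 0 < g2 /\
         r = spec_rad (M_BGD A1 A2 g1 g2)].

Definition rho_HB_star (R : realType) (m n : nat) (A : 'M[R]_(m, n)) : R :=
  inf [set r : R | exists a b : R, 0 < a /\ 0 <= b /\ r = spec_rad (N_HB A a b)].

(* Main.v *)
Require Import Defs.
From HB Require Import structures.
From mathcomp Require Import all_boot all_order all_algebra.
From mathcomp Require Import complex.
From mathcomp Require Import boolp classical_sets reals.
From mathcomp Require Import ring lra.
Import Order.TTheory GRing.Theory Num.Theory.
Local Open Scope ring_scope.

Section Helpers.
Context {R : realType}.
Local Notation normc := (@ComplexField.Normc.normc R).

Lemma normc_ge0 (z : R[i]) : 0 <= normc z.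
Proof. by case: z => a b; rewrite /= sqrtr_ge0. Qed.

Lemma normc_real (x : R) : normc (x%:C)%C = `|x|.
Proof. by rewrite /= expr0n /= addr0 sqrtr_sqr. Qed.

Lemma eig_finite {k} (G : 'M[R[i]]_k) :
  exists rs : seq R[i], forall l, eigenvalue G l -> l \in rs.
Proof.
case: (closed_field_poly_normal (char_poly G)) => rs Hrs.
exists rs => l; rewrite eigenvalue_root_char Hrs rootZ ?root_prod_XsubC //.
by rewrite (monicP (char_poly_monic G)) oner_neq0.
Qed.

Lemma le_sum_seq (rs : seq R[i]) z : z \in rs -> normc z <= \sum_(y <- rs) normc y.
Proof.
elim: rs => // y rs IH; rewrite in_cons big_cons => /orP [/eqP -> | /IH H].
  by rewrite lerDl sumr_ge0 // => *; exact: normc_ge0.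
by rewrite (le_trans H) // lerDr normc_ge0.
Qed.

Lemma spec_rad_ge {k} {B : 'M[R]_k} {lam} :
  eigenvalue (cplx_mx B) lam -> normc lam <= spec_rad B.
Proof.
move=> He; apply: sup_upper_bound; last by exists lam.
split; first by exists (normc lam); exists lam.
have [rs Hrs] := eig_finite (cplx_mx B).
exists (\sum_(y <- rs) normc y) => r [l [Hl ->]].
exact/le_sum_seq/Hrs.
Qed.

Lemma spec_rad_ge0 {k} (B : 'M[R]_k) : 0 <= spec_rad B.
Proof.
rewrite /spec_rad; set E := (X in sup X).
have [[r [l [Hl _]]]|] := pselect ((E !=set0)%classic).
  by rewrite (le_trans (normc_ge0 l)) // (spec_rad_ge Hl).
by move=> H; rewrite sup_out // => -[]; tauto.
Qed.

Lemma spec_rad_le {k} (B : 'M[R]_k) x : 0 <= x ->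
  (forall lam, eigenvalue (cplx_mx B) lam -> normc lam <= x) -> spec_rad B <= x.
Proof.
move=> x0 H; rewrite /spec_rad; set E := (X in sup X).
have [HE|] := pselect ((E !=set0)%classic).
  by apply: ge_sup => // r [l [Hl ->]]; exact: H.
by move=> HE; rewrite sup_out // => -[]; tauto.
Qed.


Lemma Re_sum (I : Type) (r : seq I) (P : pred I) (F : I -> R[i]) :
  complex.Re (\sum_(i <- r | P i) F i) = \sum_(i <- r | P i) complex.Re (F i).
Proof. by elim/big_rec2: _ => // i y1 y2 _ <-; case: (F i); case: y2. Qed.

Lemma Im_sum (I : Type) (r : seq I) (P : pred I) (F : I -> R[i]) :
  complex.Im (\sum_(i <- r | P i) F i) = \sum_(i <- r | P i) complex.Im (F i).
Proof. by elim/big_rec2: _ => // i y1 y2 _ <-; case: (F i); case: y2. Qed.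

Lemma ReMr (a : R[i]) (b : R) : complex.Re (a * (b%:C)%C) = complex.Re a * b.
Proof. by case: a => x y /=; rewrite mulr0 subr0. Qed.
Lemma ImMr (a : R[i]) (b : R) : complex.Im (a * (b%:C)%C) = complex.Im a * b.
Proof. by case: a => x y /=; rewrite mulr0 add0r. Qed.
Lemma ReM (a b : R[i]) : complex.Re (a * b) = complex.Re a * complex.Re b - complex.Im a * complex.Im b.
Proof. by case: a => x y; case: b. Qed.
Lemma ImM (a b : R[i]) : complex.Im (a * b) = complex.Re a * complex.Im b + complex.Im a * complex.Re b.
Proof. by case: a => x y; case: b. Qed.


Lemma rowdot_ge0 {k} (v : 'rV[R]_k) : 0 <= (v *m v^T) 0 0.
Proof. by rewrite !mxE sumr_ge0 // => i _; rewrite mxE -expr2 sqr_ge0. Qed.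

Lemma rowdot_eq0 {k} (v : 'rV[R]_k) : (v *m v^T) 0 0 = 0 -> v = 0.
Proof.
rewrite !mxE => H; apply/rowP => j; rewrite mxE.
have : forall i : 'I_k, true -> 0 <= v 0 i * v^T i 0 by move=> i _; rewrite mxE -expr2 sqr_ge0.
move=> hp; have := @psumr_eq0P _ _ _ _ hp H j isT.
by move=> /eqP; rewrite mxE -expr2 sqrf_eq0 => /eqP.
Qed.

Lemma sym_eig {k} {C : 'M[R]_k} {z : 'rV[R[i]]_k} {kap : R[i]} :
  C^T = C -> z != 0 -> z *m cplx_mx C = kap *: z ->
  complex.Im kap = 0 /\ exists2 v : 'rV[R]_k, v != 0 & v *m C = complex.Re kap *: v.
Proof.
move=> Csym z0 Hz.
pose u := \row_j complex.Re (z 0 j); pose w := \row_j complex.Im (z 0 j).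
pose a := complex.Re kap; pose b := complex.Im kap.
have Hu : u *m C = a *: u - b *: w.
  apply/rowP => j; have := congr1 (fun M : 'M[R[i]]_(1,k) => complex.Re (M 0 j)) Hz.
  rewrite /= !mxE Re_sum ReM => <-; apply: eq_bigr => i _.
  by rewrite !mxE ReMr.
have Hw : w *m C = a *: w + b *: u.
  apply/rowP => j; have := congr1 (fun M : 'M[R[i]]_(1,k) => complex.Im (M 0 j)) Hz.
  rewrite /= !mxE Im_sum ImM => <-; apply: eq_bigr => i _.
  by rewrite !mxE ImMr.
have Hsym : u *m C *m w^T = u *m (w *m C)^T.
  by rewrite trmx_mul Csym mulmxA.
have Hb : b * ((u *m u^T) 0 0 + (w *m w^T) 0 0) = 0.
  have E1 : u *m C *m w^T = a *: (u *m w^T) - b *: (w *m w^T).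
    by rewrite Hu mulmxBl -!scalemxAl.
  have E2 : u *m (w *m C)^T = a *: (u *m w^T) + b *: (u *m u^T).
    by rewrite Hw linearD /= !linearZ /= mulmxDr -!scalemxAr.
  move: Hsym; rewrite E1 E2.
  move=> /(congr1 (fun M : 'M[R]_(1,1) => M 0 0)); rewrite !mxE.
  move=> E; lra.
have Hb0 : b = 0.
  have [//|bn0] := eqVneq b 0; exfalso; move/negP: z0; apply; apply/eqP.
  move: Hb => /eqP; rewrite mulf_eq0 (negbTE bn0) /= => /eqP Hs.
  have := rowdot_ge0 u; have := rowdot_ge0 w => h1 h2.
  have /rowdot_eq0 Hu0 : (u *m u^T) 0 0 = 0 by lra.
  have /rowdot_eq0 Hw0 : (w *m w^T) 0 0 = 0 by lra.
  apply/rowP => j; have := congr1 (fun M : 'M[R]_(1,k) => M 0 j) Hu0; have := congr1 (fun M : 'M[R]_(1,k) => M 0 j) Hw0.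
  rewrite !mxE; case: (z 0 j) => x y /= -> ->; done.
split => //.
have [u0|un0] := eqVneq u 0.
  exists w; last by rewrite Hw -/b Hb0 scale0r addr0.
  apply: contra_neq z0 => w0; apply/rowP => j.
  have := congr1 (fun M : 'M[R]_(1,k) => M 0 j) u0; have := congr1 (fun M : 'M[R]_(1,k) => M 0 j) w0.
  rewrite !mxE; case: (z 0 j) => x y /= -> ->; done.
by exists u; last by rewrite Hu -/b Hb0 scale0r subr0.
Qed.


Lemma seq_argmax (T : eqType) (s : seq T) (P : pred T) (F : T -> R) :
  has P s -> exists2 z, (z \in s) && P z & forall y, y \in s -> P y -> F y <= F z.
Proof.
elim: s => // x s IH /=; case Px: (P x) => /=.
  case Hs: (has P s).
    have [z /andP[zs Pz] Hz] := IH Hs.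
    have [h|h] := leP (F z) (F x).
      exists x; first by rewrite in_cons eqxx Px.
      move=> y; rewrite in_cons => /orP[/eqP->//|ys Py]; exact: le_trans (Hz _ ys Py) h.
    exists z; first by rewrite in_cons zs orbT Pz.
    move=> y; rewrite in_cons => /orP[/eqP->|ys Py]; last exact: Hz.
    move=> _; exact: ltW h.
  exists x; first by rewrite in_cons eqxx Px.
  move=> y; rewrite in_cons => /orP[/eqP->//|ys Py].
  by move/hasPn: Hs => /(_ _ ys); rewrite Py.
move=> Hs; have [z /andP[zs Pz] Hz] := IH Hs.
exists z; first by rewrite in_cons zs orbT Pz.
move=> y; rewrite in_cons => /orP[/eqP->|ys Py]; last exact: Hz.
by rewrite Px.
Qed.

Lemma max_eig {k} {C : 'M[R]_k} : C^T = C ->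
  (forall (v : 'rV[R]_k) (s : R), v != 0 -> v *m C = s *: v -> 0 <= s <= 1) ->
  exists S : R, [/\ 0 <= S <= 1,
    (forall (z : 'rV[R[i]]_k) kap, z != 0 -> z *m cplx_mx C = kap *: z ->
        kap = ((complex.Re kap)%:C)%C /\ 0 <= complex.Re kap <= S) &
    (0 < S -> exists2 v : 'rV[R]_k, v != 0 & v *m C = S *: v)].
Proof.
move=> Cs Hb.
have [rs Hrs] := eig_finite (cplx_mx C).
case Hh: (has (fun z => eigenvalue (cplx_mx C) z) rs).
  have [z0 /andP[z0s Pz0] Hmax] := @seq_argmax _ rs _ (fun z => complex.Re z) Hh.
  have /eigenvalueP [y yC y0] := Pz0.
  have [Im0 [v v0 vC]] := sym_eig Cs y0 yC.
  exists (complex.Re z0); split.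
  - exact: Hb v0 vC.
  - move=> z kap zn0 zC; have [Imk [v' v'0 v'C]] := sym_eig Cs zn0 zC; split.
      by case: kap zC Imk v'C => x y' /= _ ->.
    have He : eigenvalue (cplx_mx C) kap by apply/eigenvalueP; exists z.
    have /andP[-> _] := Hb _ _ v'0 v'C.
    exact: Hmax (Hrs _ He) He.
  - by move=> _; exists v.
exists 0; split; [by rewrite lexx ler01 | | by rewrite ltxx].
move=> z kap zn0 zC; exfalso.
have He : eigenvalue (cplx_mx C) kap by apply/eigenvalueP; exists z.
by move/hasPn: Hh => /(_ _ (Hrs _ He)); rewrite He.
Qed.

Lemma C_bounds {m n1 n2} {A1 : 'M[R]_(m,n1)} {A2 : 'M[R]_(m,n2)} :
  A1^T *m A1 = 1%:M -> A2^T *m A2 = 1%:M ->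
  forall (v : 'rV[R]_n1) (s : R), v != 0 -> v *m ((A2^T *m A1)^T *m (A2^T *m A1)) = s *: v -> 0 <= s <= 1.
Proof.
set B := A2^T *m A1 => H1 H2 v s v0 Hv.
have nv0 : 0 < (v *m v^T) 0 0.
  rewrite lt_def rowdot_ge0 andbT; apply/eqP => /rowdot_eq0 h; by rewrite h eqxx in v0.
set y := v *m B^T.
have yT : y^T = B *m v^T by rewrite /y trmx_mul trmxK.
have Ey : (y *m y^T) 0 0 = s * (v *m v^T) 0 0.
  by rewrite yT /y mulmxA -(mulmxA v) Hv -scalemxAl mxE.
have HB : A1^T *m A2 = B^T by rewrite /B trmx_mul trmxK.
pose x := v *m A1^T - y *m A2^T.
have Ex : x *m x^T = v *m v^T - y *m y^T.
  rewrite /x linearB /= !trmx_mul !trmxK mulmxBl !mulmxBr !mulmxA.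
  rewrite -(mulmxA v A1^T A1) H1 mulmx1 -(mulmxA v A1^T A2) HB -/y.
  rewrite -(mulmxA y A2^T A1) -/B -(mulmxA y A2^T A2) H2 mulmx1.
  rewrite -(mulmxA y B) -yT.
  by rewrite -(mulmxA y A2^T A1) -/B -(mulmxA y B) -yT subrr subr0.
have hsub : forall (P Q : 'M[R]_(1,1)), (P - Q) 0 0 = P 0 0 - Q 0 0.
  by move=> P Q; rewrite !mxE.
have := rowdot_ge0 x; rewrite Ex hsub Ey => h0.
have := rowdot_ge0 y; rewrite Ey => hy.
apply/andP; split; nra.
Qed.


Lemma ReD (a b : R[i]) : complex.Re (a + b) = complex.Re a + complex.Re b.
Proof. by case: a => x y; case: b. Qed.
Lemma ImD (a b : R[i]) : complex.Im (a + b) = complex.Im a + complex.Im b.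
Proof. by case: a => x y; case: b. Qed.

Lemma quad_bound (om t : R) (mu : R[i]) : 1 <= om -> 0 <= t -> t <= 4 * (om - 1) ->
  (mu + (om%:C)%C - 1) ^+ 2 = (t%:C)%C * mu -> normc mu <= om - 1.
Proof.
move=> om1 t0 t4.
have -> : (mu + (om%:C)%C - 1) = mu + ((om - 1)%:C)%C by rewrite rmorphB /= rmorph1 addrA.
set d := om - 1.
case: mu => a b H.
have HRe := congr1 (@complex.Re R) H; have HIm := congr1 (@complex.Im R) H.
move: HRe HIm; rewrite expr2 ReM ImM /= !addr0 !mul0r subr0 addr0.
move=> HRe HIm.
have d0 : 0 <= d by rewrite /d subr_ge0.
have Hab : a ^+ 2 + b ^+ 2 <= d ^+ 2.
  have [b0|bn0] := eqVneq b 0.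
    rewrite b0 in HRe *.
    have h1 : (2 * a - t + 2 * d) ^+ 2 = t * (t - 4 * d) by nra.
    have h2 : t * (t - 4 * d) <= 0 by apply: mulr_ge0_le0 => //; rewrite /d; lra.
    have h3 : (2 * a - t + 2 * d) ^+ 2 = 0 by have := sqr_ge0 (2 * a - t + 2 * d); lra.
    move: h3 => /eqP; rewrite sqrf_eq0 => /eqP h3.
    nra.
  have Ha : (a + d) * 2 = t.
    apply: (mulIf bn0); lra.
  nra.
rewrite -(ger0_norm d0) -sqrtr_sqr; exact: ler_wsqrtr.
Qed.

Lemma bgd_alg (K : fieldType) n1 n2 (Bc : 'M[K]_(n2,n1)) (x1 y1 : 'rV[K]_n1)
  (x2 : 'rV[K]_n2) (w mu : K) :
  y1 = x1 - w *: (x2 *m Bc) -> (1 - w) *: y1 = mu *: x1 ->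
  (1 - w) *: x2 - w *: (y1 *m Bc^T) = mu *: x2 ->
  (mu + w - 1) ^+ 2 *: y1 = (w ^+ 2 * mu) *: (y1 *m (Bc^T *m Bc)).
Proof.
move=> Hy E1 E2.
have E2' : w *: (y1 *m Bc^T) = (1 - w - mu) *: x2.
  by rewrite scalerBl -E2 opprB addrC subrK.
have Hy' : w *: (x2 *m Bc) = x1 - y1 by rewrite Hy opprB addrC subrK.
have -> : (w ^+ 2 * mu) *: (y1 *m (Bc^T *m Bc)) = (w * mu) *: ((w *: (y1 *m Bc^T)) *m Bc).
  by rewrite -scalemxAl scalerA mulmxA; congr (_ *: _); ring.
rewrite E2' -scalemxAl scalerA.
have -> : w * mu * (1 - w - mu) = (mu * (1 - w - mu)) * w by rewrite mulrC mulrA mulrC mulrA.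
rewrite -scalerA Hy' scalerBr (mulrC mu) -[(_ * mu) *: x1]scalerA -E1 !scalerA -scalerBl.
by congr (_ *: _); ring.
Qed.


Lemma bgd_bound {m n1 n2} {A1 : 'M[R]_(m,n1)} {A2 : 'M[R]_(m,n2)} {S om : R} :
  A1^T *m A1 = 1%:M -> A2^T *m A2 = 1%:M -> 1 <= om -> om ^+ 2 * S <= 4 * (om - 1) ->
  (forall (z : 'rV[R[i]]_n1) kap, z != 0 ->
     z *m cplx_mx ((A2^T *m A1)^T *m (A2^T *m A1)) = kap *: z ->
     kap = ((complex.Re kap)%:C)%C /\ 0 <= complex.Re kap <= S) ->
  spec_rad (M_BGD A1 A2 om om) <= om - 1.
Proof.
move=> H1 H2 om1 HS Heig.
set B := A2^T *m A1.
have HB : A1^T *m A2 = B^T by rewrite /B trmx_mul trmxK.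
apply: spec_rad_le; first by rewrite subr_ge0.
move=> mu /eigenvalueP [x Hx x0].
set w := (om%:C)%C.
set Bc := map_mx (real_complex R) B.
have HM : cplx_mx (M_BGD A1 A2 om om) = (1%:M - block_mx 0 0 (w *: Bc) (w *: 1%:M))
     *m (1%:M - block_mx (w *: 1%:M) (w *: Bc^T) 0 0).
  rewrite /M_BGD /cplx_mx H1 H2 HB -/B.
  rewrite map_mxM; congr (_ *m _).
    rewrite map_mxB map_mx1 map_block_mx map_mx0 !map_mxZ map_mx1 map_mx0 //.
  rewrite map_mxB map_mx1 map_block_mx map_mx0 !map_mxZ map_mx1 map_mx0 map_trmx //.
rewrite HM -(hsubmxK x) in Hx x0.
set x1 := lsubmx x in Hx x0; set x2 := rsubmx x in Hx x0.
have Hx1 : row_mx x1 x2 *m (1%:M - block_mx 0 0 (w *: Bc) (w *: 1%:M)) =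
    row_mx (x1 - w *: (x2 *m Bc)) ((1 - w) *: x2).
  by rewrite mulmxBr mulmx1 mul_row_block !mulmx0 !add0r -!scalemxAr mulmx1 opp_row_mx add_row_mx !scalerBl !scale1r.
rewrite mulmxA Hx1 in Hx.
set y1 := x1 - w *: (x2 *m Bc) in Hx.
have Hx2 : row_mx y1 ((1 - w) *: x2) *m (1%:M - block_mx (w *: 1%:M) (w *: Bc^T) 0 0) =
    row_mx ((1 - w) *: y1) ((1 - w) *: x2 - w *: (y1 *m Bc^T)).
  by rewrite mulmxBr mulmx1 mul_row_block !mulmx0 !addr0 -!scalemxAr mulmx1 opp_row_mx add_row_mx !scalerBl !scale1r.
rewrite Hx2 scale_row_mx in Hx.
case/eq_row_mx: Hx => E1 E2.
have Key := @bgd_alg _ _ _ Bc x1 y1 x2 w mu (erefl _) E1 E2.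
have d0 : 0 <= om - 1 by rewrite subr_ge0.
have [->|mu0] := eqVneq mu 0.
  by rewrite ComplexField.Normc.normc0.
have [y10|y1n0] := eqVneq y1 0.
  rewrite y10 scaler0 in E1.
  have x10 : x1 = 0 by move/eqP: E1; rewrite eq_sym scaler_eq0 (negbTE mu0) => /eqP.
  rewrite y10 mul0mx scaler0 subr0 in E2.
  have x2n0 : x2 != 0 by apply: contra_neq x0 => ->; rewrite x10 row_mx0.
  have : (1 - w - mu) *: x2 = 0 by rewrite scalerBl E2 subrr.
  move/eqP; rewrite scaler_eq0 (negbTE x2n0) orbF subr_eq0 => /eqP <-.
  rewrite /w -(rmorph1 (real_complex R)) -rmorphB normc_real ler0_norm ?opprB //; lra.
have w0 : w != 0.
  by rewrite /w -(rmorph0 (real_complex R)) (inj_eq (@complexI _)); apply/eqP; lra.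
have wm0 : w ^+ 2 * mu != 0 by rewrite mulf_neq0 // expf_neq0.
set kap := (w ^+ 2 * mu)^-1 * (mu + w - 1) ^+ 2.
have HCc : cplx_mx ((A2^T *m A1)^T *m (A2^T *m A1)) = Bc^T *m Bc.
  by rewrite /cplx_mx -/B map_mxM map_trmx.
have Hy1C : y1 *m cplx_mx ((A2^T *m A1)^T *m (A2^T *m A1)) = kap *: y1.
  by rewrite HCc -[in RHS]scalerA Key scalerA mulVf ?scale1r.
have [Hk /andP[k0 kS]] := Heig _ _ y1n0 Hy1C.
apply: (@quad_bound om (om ^+ 2 * complex.Re kap)) => //.
- by rewrite mulr_ge0 // sqr_ge0.
- by apply: le_trans HS; rewrite ler_wpM2l // sqr_ge0.
rewrite rmorphM rmorphXn /= -Hk -/w /kap.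
field.
by rewrite mu0 w0.
Qed.


Lemma hb_eig {m n} {A : 'M[R]_(m,n)} {a b : R} {u : 'rV[R]_n} {lam : R} {mu : R[i]} :
  u != 0 -> u *m (A^T *m A) = lam *: u ->
  mu ^+ 2 - ((1 + b - a * lam)%:C)%C * mu + (b%:C)%C = 0 ->
  eigenvalue (cplx_mx (N_HB A a b)) mu.
Proof.
move=> u0 Hu Hq; apply/eigenvalueP.
set p := 1 + b - a * lam in Hq.
set cu := map_mx (real_complex R) u.
have HP : u *m ((1 + b)%:M - a *: (A^T *m A)) = p *: u.
  by rewrite mulmxBr mul_mx_scalar -scalemxAr Hu scalerA -scalerBl.
have HN : u *m (- b%:M) = (- b) *: u by rewrite mulmxN mul_mx_scalar scaleNr.
exists (row_mx ((mu - (p%:C)%C) *: cu) cu).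
  rewrite /cplx_mx /N_HB map_block_mx mul_row_block map_mx0 mulmx0 add0r map_mx1 mulmx1 -!map_mxM.
  rewrite HP HN !map_mxZ scale_row_mx; congr row_mx.
    rewrite scalerA; congr (_ *: _).
    rewrite rmorphN /=; apply/eqP; rewrite eq_sym -subr_eq0 opprK -Hq; apply/eqP; ring.
  by rewrite scalerBl subrK.
apply/eqP => /(congr1 rsubmx); rewrite row_mxKr linear0 => /eqP.
by rewrite map_mx_eq0 (negbTE u0).
Qed.

Lemma quad_roots {p b r : R} : 0 <= b -> 0 < r ->
  (forall mu : R[i], mu ^+ 2 - (p%:C)%C * mu + (b%:C)%C = 0 -> normc mu < r) ->
  b < r ^+ 2 /\ r * `|p| < r ^+ 2 + b.
Proof.
move=> b0 r0 H.
have Hreal x : x ^+ 2 - p * x + b = 0 -> (x%:C)%C ^+ 2 - (p%:C)%C * (x%:C)%C + (b%:C)%C = 0.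
  by move=> hx; rewrite -rmorphXn -rmorphM -rmorphB -rmorphD hx rmorph0.
have Hpr : r * `|p| < r ^+ 2 + b <-> (r * p < r ^+ 2 + b /\ - (r * p) < r ^+ 2 + b).
  have -> : r * `|p| = `|r * p| by rewrite normrM (ger0_norm (ltW r0)).
  by rewrite ltr_norml; split => [/andP[h1 h2]|[h1 h2]];
    [split; lra | apply/andP; split; lra].
have [hD|hD] := leP (4 * b) (p ^+ 2).
  set s := Num.sqrt (p ^+ 2 - 4 * b).
  have s2 : s ^+ 2 = p ^+ 2 - 4 * b by rewrite sqr_sqrtr // subr_ge0.
  have s0 : 0 <= s := sqrtr_ge0 _.
  have h1 := H _ (Hreal ((p + s) / 2) ltac:(nra)).
  have h2 := H _ (Hreal ((p - s) / 2) ltac:(nra)).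
  rewrite normc_real ltr_norml in h1; rewrite normc_real ltr_norml in h2.
  case/andP: h1 => h1a h1b; case/andP: h2 => h2a h2b.
  have e1 : (r - (p + s) / 2) * (r - (p - s) / 2) = r ^+ 2 - r * p + b by nra.
  have e2 : (r + (p + s) / 2) * (r + (p - s) / 2) = r ^+ 2 + r * p + b by nra.
  have e3 : (r - (p + s) / 2) * (r + (p - s) / 2) + (r + (p + s) / 2) * (r - (p - s) / 2)
     = 2 * (r ^+ 2 - b) by nra.
  have q1 : 0 < (r - (p + s) / 2) * (r - (p - s) / 2) by apply: mulr_gt0; lra.
  have q2 : 0 < (r + (p + s) / 2) * (r + (p - s) / 2) by apply: mulr_gt0; lra.
  have q3 : 0 < (r - (p + s) / 2) * (r + (p - s) / 2) by apply: mulr_gt0; lra.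
  have q4 : 0 < (r + (p + s) / 2) * (r - (p - s) / 2) by apply: mulr_gt0; lra.
  split; first lra.
  by apply/Hpr; split; lra.
set s := Num.sqrt (4 * b - p ^+ 2).
have s2 : s ^+ 2 = 4 * b - p ^+ 2 by rewrite sqr_sqrtr // subr_ge0 ltW.
have s0 : 0 <= s := sqrtr_ge0 _.
have hq : ((p / 2) +i* (s / 2))%C ^+ 2 - (p%:C)%C * ((p / 2) +i* (s / 2))%C + (b%:C)%C = 0.
  apply/eqP; rewrite eq_complex /=; apply/andP; split; apply/eqP; nra.
have h := H _ hq.
move: h; rewrite /= => h.
set t := Num.sqrt b.
have t2 : t ^+ 2 = b by rewrite sqr_sqrtr.
have t0 : 0 <= t := sqrtr_ge0 _.
have ht : Num.sqrt ((p / 2) ^+ 2 + (s / 2) ^+ 2) = t.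
  by congr Num.sqrt; nra.
rewrite ht in h.
have pp : `|p| ^+ 2 = p ^+ 2 by rewrite real_normK ?num_real.
have hpp : 0 <= `|p| := normr_ge0 _.
have hp : `|p| < 2 * t.
  rewrite ltNge; apply/negP => hc; nra.
split; nra.
Qed.


Lemma hb_arith {S a b : R} : 0 < S -> S <= 1 -> 0 < a -> 0 <= b ->
  let sg := Num.sqrt S in let c := Num.sqrt (1 - S) in
  let r := sg / (1 + c) in
  b < r ^+ 2 -> r * `|1 + b - a * (1 - sg)| < r ^+ 2 + b ->
  r * `|1 + b - a * (1 + sg)| < r ^+ 2 + b -> False.
Proof.
move=> S0 S1 a0 b0 sg c r hb h1 h2.
have sg2 : sg ^+ 2 = S by rewrite sqr_sqrtr // ltW.
have c2 : c ^+ 2 = 1 - S by rewrite sqr_sqrtr // subr_ge0.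
have sg0 : 0 < sg by rewrite sqrtr_gt0.
have c0 : 0 <= c := sqrtr_ge0 _.
have c1 : 0 < 1 + c by lra.
have rc : r * (1 + c) = sg by rewrite /r mulfVK // gt_eqF.
have sg1 : sg <= 1 by nra.
have r0 : 0 < r by nra.
have key : sg * (1 + r ^+ 2) = 2 * r.
  have h : (1 + c) ^+ 2 * (sg * (1 + r ^+ 2) - 2 * r) = 0.
    have -> : (1 + c) ^+ 2 * (sg * (1 + r ^+ 2) - 2 * r) =
        sg * ((1 + c) ^+ 2 + (r * (1 + c)) ^+ 2) - 2 * (1 + c) * (r * (1 + c)) by ring.
    rewrite rc; nra.
  move/eqP: h; rewrite mulf_eq0 expf_eq0 /= subr_eq0 => /orP[/eqP h|/eqP //]; lra.
have sr1 : sg * r <= 1.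
  have : sg * r * (1 + c) = S by rewrite -mulrA rc -expr2.
  nra.
have e1 : r * (1 + b - a * (1 - sg)) < r ^+ 2 + b.
  apply: le_lt_trans h1; rewrite ler_pM2l //; exact: ler_norm.
have e2 : - (r * (1 + b - a * (1 + sg))) < r ^+ 2 + b.
  apply: le_lt_trans h2; rewrite -mulrN ler_pM2l //; rewrite -normrN; exact: ler_norm.
have e3 : sg * r * (1 + b) < r ^+ 2 + b.
  have f1 : (1 + sg) * (r * (1 + b - a * (1 - sg))) < (1 + sg) * (r ^+ 2 + b).
    by rewrite ltr_pM2l //; lra.
  have f2 : (1 - sg) * (- (r * (1 + b - a * (1 + sg)))) <= (1 - sg) * (r ^+ 2 + b).
    by rewrite ler_wpM2l ?subr_ge0 // ltW.
  have : (1 + sg) * (r * (1 + b - a * (1 - sg))) + (1 - sg) * (- (r * (1 + b - a * (1 + sg))))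
     = 2 * (sg * r * (1 + b)) by ring.
  lra.
have : b * (sg * r - 1) >= r ^+ 2 * (sg * r - 1) by nra.
nra.
Qed.


Lemma hb_bound {m n1 n2} {A1 : 'M[R]_(m,n1)} {A2 : 'M[R]_(m,n2)} {S a b : R} {v : 'rV[R]_n1} :
  A1^T *m A1 = 1%:M -> A2^T *m A2 = 1%:M -> 0 < S -> S <= 1 -> 0 < a -> 0 <= b ->
  v != 0 -> v *m ((A2^T *m A1)^T *m (A2^T *m A1)) = S *: v ->
  Num.sqrt S / (1 + Num.sqrt (1 - S)) <= spec_rad (N_HB (row_mx A1 A2) a b).
Proof.
move=> H1 H2 S0 S1 a0 b0 v0 Hv.
set B := A2^T *m A1 in Hv.
have HB : A1^T *m A2 = B^T by rewrite /B trmx_mul trmxK.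
set sg := Num.sqrt S.
have sg2 : sg ^+ 2 = S by rewrite sqr_sqrtr // ltW.
have sg0 : 0 < sg by rewrite sqrtr_gt0.
have HG : (row_mx A1 A2)^T *m row_mx A1 A2 = block_mx 1%:M B^T B 1%:M.
  by rewrite tr_row_mx mul_col_row H1 H2 HB.
have Heu (e : R) : e ^+ 2 = 1 ->
   row_mx (sg *: v) (e *: (v *m B^T)) != 0 /\
   row_mx (sg *: v) (e *: (v *m B^T)) *m ((row_mx A1 A2)^T *m row_mx A1 A2)
     = (1 + e * sg) *: row_mx (sg *: v) (e *: (v *m B^T)).
  move=> e2; split.
    apply/eqP => /(congr1 lsubmx); rewrite row_mxKl linear0 => /eqP.
    by rewrite scaler_eq0 (negbTE v0) orbF gt_eqF.
  rewrite HG mul_row_block !mulmx1 -!scalemxAl -(mulmxA v) Hv scale_row_mx !scalerA -!scalerDl.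
  congr row_mx; congr (_ *: _).
    by rewrite -sg2; ring.
  by rewrite mulrDl mul1r mulrAC -expr2 e2 mul1r addrC.
set c := Num.sqrt (1 - S).
have c0 : 0 <= c := sqrtr_ge0 _.
have r0 : 0 < sg / (1 + c) by rewrite divr_gt0 //; lra.
rewrite leNgt; apply/negP => Hlt.
have bnd lam (u : 'rV[R]_(n1 + n2)) : u != 0 ->
    u *m ((row_mx A1 A2)^T *m row_mx A1 A2) = lam *: u ->
    forall mu : R[i], mu ^+ 2 - ((1 + b - a * lam)%:C)%C * mu + (b%:C)%C = 0 ->
    normc mu < sg / (1 + c).
  move=> un0 Hu mu Hmu; apply: le_lt_trans Hlt.
  exact: spec_rad_ge (hb_eig un0 Hu Hmu).
have [u1n0 Hu1] := Heu (-1) ltac:(by rewrite sqrrN expr1n).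
have [u2n0 Hu2] := Heu 1 ltac:(by rewrite expr1n).
have [hb h1] := quad_roots b0 r0 (bnd _ _ u1n0 Hu1).
have [_ h2] := quad_roots b0 r0 (bnd _ _ u2n0 Hu2).
rewrite mulN1r -/(_ - _) in h1; rewrite mul1r in h2.
exact: (hb_arith S0 S1 a0 b0 hb h1 h2).
Qed.

End Helpers.

Theorem theorem1 (R : realType) (m n1 n2 : nat)
  (A1 : 'M[R]_(m, n1)) (A2 : 'M[R]_(m, n2)) :
  \rank (row_mx A1 A2) = (n1 + n2)%N ->
  A1^T *m A1 = 1%:M ->
  A2^T *m A2 = 1%:M ->
  A2^T *m A1 != 0 ->
  rho_BGD_star A1 A2 <= (rho_HB_star (row_mx A1 A2)) ^+ 2.
Proof.
move=> _ H1 H2 _.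
have Csym : ((A2^T *m A1)^T *m (A2^T *m A1))^T = (A2^T *m A1)^T *m (A2^T *m A1).
  by rewrite trmx_mul trmxK.
have [S [/andP[S0 S1] Heig Hvec]] := max_eig Csym (C_bounds H1 H2).
set c := Num.sqrt (1 - S); set sg := Num.sqrt S.
set r := sg / (1 + c); set om := 2 / (1 + c).
have c2 : c ^+ 2 = 1 - S by rewrite sqr_sqrtr // subr_ge0.
have sg2 : sg ^+ 2 = S by rewrite sqr_sqrtr.
have c0 : 0 <= c := sqrtr_ge0 _.
have sg0 : 0 <= sg := sqrtr_ge0 _.
have c1 : 0 < 1 + c by lra.
have c1n : (1 + c) ^+ 2 != 0 by rewrite expf_neq0 // gt_eqF.
have rc : r * (1 + c) = sg by rewrite /r mulfVK // gt_eqF.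
have oc : om * (1 + c) = 2 by rewrite /om mulfVK // gt_eqF.
have r0 : 0 <= r by rewrite /r divr_ge0 // ltW.
have om1 : 1 <= om by rewrite /om ler_pdivlMr // mul1r; nra.
have omr : om - 1 = r ^+ 2.
  apply: (mulIf c1n).
  have -> : (om - 1) * (1 + c) ^+ 2 = (om * (1 + c)) * (1 + c) - (1 + c) ^+ 2 by ring.
  have -> : r ^+ 2 * (1 + c) ^+ 2 = (r * (1 + c)) ^+ 2 by ring.
  rewrite oc rc sg2; nra.
have HS : om ^+ 2 * S <= 4 * (om - 1).
  have os : om * sg = 2 * r.
    apply: (mulIf (negbT (gt_eqF c1))).
    have -> : om * sg * (1 + c) = (om * (1 + c)) * sg by ring.
    have -> : 2 * r * (1 + c) = 2 * (r * (1 + c)) by ring.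
    by rewrite oc rc.
  have -> : om ^+ 2 * S = (om * sg) ^+ 2 by rewrite -sg2; ring.
  rewrite os omr; nra.
have Hbgd : rho_BGD_star A1 A2 <= r ^+ 2.
  rewrite -omr; apply: le_trans (bgd_bound H1 H2 om1 HS Heig).
  apply: ge_inf.
    exists 0 => y [g1 [g2 [_ [_ ->]]]]; exact: spec_rad_ge0.
  exists om, om; split; first lra.
  by split; first lra.
have Hhb : r <= rho_HB_star (row_mx A1 A2).
  apply: lb_le_inf.
    by exists (spec_rad (N_HB (row_mx A1 A2) 1 0)); exists 1, 0; split; [lra|split; [lra|]].
  move=> y [a [b [a0 [b0 ->]]]].
  have [S0'|] := eqVneq S 0.
    have -> : r = 0 by rewrite /r /sg S0' sqrtr0 mul0r.
    exact: spec_rad_ge0.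
  move=> Sn0; have Spos : 0 < S by rewrite lt_def Sn0 S0.
  have [v v0 Hv] := Hvec Spos.
  exact: (hb_bound H1 H2 Spos S1 a0 b0 v0 Hv).
apply: (le_trans Hbgd).
have := Hhb; nra.
Qed.
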